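(* Let $\alpha\in(0,1)$ and let $f_n,g_n:[0,+\infty)\to\mathbb{R}$ ($n\in\mathbb{N}$) be functions such that: $f_n$ and $g_n$ are H\''older continuous of order $\alpha$ for every $n$; $g_n\to0$ uniformly on $[0,+\infty)$; and there exists $L\in\mathbb{R}$ with $|f_n(t_1)-f_n(t_2)|\le L|t_1-t_2|$ for all $n\in\mathbb{N}$ and all $t_1,t_2\ge0$. Then $$\limsup_{n\to+\infty}\operatorname{Hold}_\alpha(f_n+g_n)\le\max\Big\{\limsup_{n\to+\infty}\operatorname{Hold}_\alpha(f_n),\ \limsup_{n\to+\infty}\operatorname{Hold}_\alpha(g_n)\Big\}.$$
   Context: For $c:[0,+\infty)\to\mathbb{R}$, $\operatorname{Hold}_\alpha(c):=\sup\{|c(t)-c(s)|/|t-s|^\alpha:\ t,s\ge0,\ t\neq s\}$. *)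

(* Defs.v *)
From Stdlib Require Import Reals Lra ClassicalEpsilon.
Open Scope R_scope.

Definition Hold_set (alpha : R) (c : R -> R) : R -> Prop :=
  fun r => exists t s, 0 <= t /\ 0 <= s /\ t <> s /\
    r = Rabs (c t - c s) / Rpower (Rabs (t - s)) alpha.

Definition Holder_continuous (alpha : R) (c : R -> R) : Prop :=
  bound (Hold_set alpha c).

(* Hold_alpha(c) = sup of the Hölder quotients (meaningful when c is
   Hölder continuous; the set is always nonempty). *)
Definition Hold (alpha : R) (c : R -> R) : R :=
  epsilon (inhabits 0) (fun h => is_lub (Hold_set alpha c) h).

Inductive Rbar : Type := Finite (x : R) | p_infty | m_infty.

Definition Rbar_le (x y : Rbar) : Prop :=
  match x, y with
  | m_infty, _ => True
  | _, p_infty => True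
  | p_infty, _ => False
  | _, m_infty => False
  | Finite a, Finite b => a <= b
  end.

Definition Rbar_max (x y : Rbar) : Rbar :=
  match x, y with
  | p_infty, _ | _, p_infty => p_infty
  | m_infty, z | z, m_infty => z
  | Finite a, Finite b => Finite (Rmax a b)
  end.

Definition is_limsup (u : nat -> R) (l : Rbar) : Prop :=
  match l with
  | Finite x =>
      (forall eps, 0 < eps -> exists N, forall n, (N <= n)%nat -> u n < x + eps) /\
      (forall eps, 0 < eps -> forall N, exists n, (N <= n)%nat /\ x - eps < u n)
  | p_infty => forall M N, exists n, (N <= n)%nat /\ M < u n
  | m_infty => forall M, exists N, forall n, (N <= n)%nat -> u n < M
  end.

(* Main.v *)
Require Import Defs.
From Stdlib Require Import Reals Lra Lia ClassicalEpsilon.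
Open Scope R_scope.

Lemma Rpower_pos' x y : 0 < Rpower x y.
Proof. unfold Rpower; apply exp_pos. Qed.

Lemma Hold_spec alpha c : Holder_continuous alpha c -> is_lub (Hold_set alpha c) (Hold alpha c).
Proof.
  intro H. unfold Hold. apply epsilon_spec.
  destruct (completeness (Hold_set alpha c) H) as [m Hm].
  - exists (Rabs (c 1 - c 0) / Rpower (Rabs (1 - 0)) alpha), 1, 0.
    repeat split; lra.
  - exists m; exact Hm.
Qed.

Lemma Hold_ge0 alpha c : Holder_continuous alpha c -> 0 <= Hold alpha c.
Proof.
  intro H. destruct (Hold_spec alpha c H) as [Hu _].
  eapply Rle_trans; [|apply Hu; exists 1, 0; repeat split; try lra; reflexivity].
  unfold Rdiv; apply Rmult_le_pos; [apply Rabs_pos|left; apply Rinv_0_lt_compat, Rpower_pos'].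
Qed.

Lemma div_triang a b p : 0 < p -> Rabs (a + b) / p <= Rabs a / p + Rabs b / p.
Proof.
  intro Hp. unfold Rdiv; rewrite <- Rmult_plus_distr_r.
  apply Rmult_le_compat_r; [left; apply Rinv_0_lt_compat; auto | apply Rabs_triang].
Qed.

Lemma Holder_sum alpha f g : Holder_continuous alpha f -> Holder_continuous alpha g ->
  Holder_continuous alpha (fun t => f t + g t).
Proof.
  intros [Mf Hf] [Mg Hg]. exists (Mf + Mg).
  intros r [t [s [ht [hs [hts ->]]]]].
  replace (f t + g t - (f s + g s)) with ((f t - f s) + (g t - g s)) by ring.
  eapply Rle_trans; [apply div_triang, Rpower_pos'|].
  apply Rplus_le_compat; [apply Hf|apply Hg]; exists t, s; repeat split; auto.
Qed.

Lemma key (alpha : R) (f g : nat -> R -> R) :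
  0 < alpha < 1 ->
  (forall n, Holder_continuous alpha (f n)) ->
  (forall n, Holder_continuous alpha (g n)) ->
  (forall eps, 0 < eps -> exists N, forall n t, (N <= n)%nat -> 0 <= t ->
      Rabs (g n t) < eps) ->
  (exists L : R, forall n t1 t2, 0 <= t1 -> 0 <= t2 ->
      Rabs (f n t1 - f n t2) <= L * Rabs (t1 - t2)) ->
  forall eta, 0 < eta -> exists N, forall n, (N <= n)%nat ->
    Hold alpha (fun t => f n t + g n t) <= Rmax (Hold alpha (f n)) (Hold alpha (g n)) + eta.
Proof.
  intros Ha Hf Hg Hconv [L HL] eta Heta.
  set (a := eta / (Rabs L + 1)).
  assert (Ha0 : 0 < a) by (unfold a; apply Rdiv_lt_0_compat; [lra| pose proof (Rabs_pos L); lra]).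
  set (delta := Rpower a (/ (1 - alpha))).
  assert (Hd0 : 0 < delta) by apply Rpower_pos'.
  assert (Hdel : Rpower delta (1 - alpha) = a).
  { unfold delta; rewrite Rpower_mult. replace (/ (1 - alpha) * (1 - alpha)) with 1 by (field; lra).
    apply Rpower_1; auto. }
  set (pd := Rpower delta alpha).
  assert (Hpd : 0 < pd) by apply Rpower_pos'.
  destruct (Hconv (eta * pd / 2)) as [N HN].
  { apply Rdiv_lt_0_compat; [apply Rmult_lt_0_compat|]; lra. }
  exists N. intros n Hn.
  destruct (Hold_spec _ _ (Holder_sum alpha (f n) (g n) (Hf n) (Hg n))) as [_ Hlub].
  apply Hlub. intros r [t [s [ht [hs [hts ->]]]]].
  destruct (Hold_spec _ _ (Hf n)) as [Huf _].
  destruct (Hold_spec _ _ (Hg n)) as [Hug _].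
  assert (Qf : Rabs (f n t - f n s) / Rpower (Rabs (t - s)) alpha <= Hold alpha (f n))
    by (apply Huf; exists t, s; repeat split; auto).
  assert (Qg : Rabs (g n t - g n s) / Rpower (Rabs (t - s)) alpha <= Hold alpha (g n))
    by (apply Hug; exists t, s; repeat split; auto).
  set (d := Rabs (t - s)) in *.
  assert (Hdpos : 0 < d) by (apply Rabs_pos_lt; lra).
  set (p := Rpower d alpha) in *.
  assert (Hp : 0 < p) by apply Rpower_pos'.
  pose proof (Rmax_l (Hold alpha (f n)) (Hold alpha (g n))).
  pose proof (Rmax_r (Hold alpha (f n)) (Hold alpha (g n))).
  destruct (Rlt_or_le d delta) as [Hlt | Hge].
  - replace (f n t + g n t - (f n s + g n s)) with ((g n t - g n s) + (f n t - f n s)) by ring.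
    eapply Rle_trans; [apply div_triang; auto|].
    assert (Rabs (f n t - f n s) / p <= eta); [|lra].
    assert (E1 : Rabs (f n t - f n s) <= Rabs L * d).
    { eapply Rle_trans; [apply HL; auto|]. apply Rmult_le_compat_r; [lra|apply Rle_abs]. }
    assert (E2 : d = p * Rpower d (1 - alpha)).
    { unfold p; rewrite <- Rpower_plus. replace (alpha + (1 - alpha)) with 1 by ring.
      symmetry; apply Rpower_1; auto. }
    assert (E3 : Rpower d (1 - alpha) <= a).
    { rewrite <- Hdel. apply Rle_Rpower_l; lra. }
    apply (Rmult_le_reg_r p); auto. unfold Rdiv. rewrite Rmult_assoc, Rinv_l by lra.
    rewrite Rmult_1_r. eapply Rle_trans; [apply E1|]. rewrite E2.
    assert (Rabs L * a <= eta).
    { unfold a. apply (Rmult_le_reg_r (Rabs L + 1)); [pose proof (Rabs_pos L); lra|].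
      unfold Rdiv. rewrite Rmult_assoc, Rmult_assoc, Rinv_l by (pose proof (Rabs_pos L); lra).
      pose proof (Rabs_pos L); nra. }
    assert (0 <= Rabs L) by apply Rabs_pos.
    assert (Rabs L * Rpower d (1 - alpha) <= eta).
    { eapply Rle_trans; [|eassumption]. apply Rmult_le_compat_l; auto. }
    replace (Rabs L * (p * Rpower d (1 - alpha))) with ((Rabs L * Rpower d (1 - alpha)) * p) by ring.
    apply Rmult_le_compat_r; lra.
  - replace (f n t + g n t - (f n s + g n s)) with ((f n t - f n s) + (g n t - g n s)) by ring.
    eapply Rle_trans; [apply div_triang; auto|].
    assert (Rabs (g n t - g n s) / p <= eta); [|lra].
    assert (G1 : Rabs (g n t - g n s) <= eta * pd).
    { unfold Rminus. eapply Rle_trans; [apply Rabs_triang|]. rewrite Rabs_Ropp.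
      pose proof (HN n t Hn ht). pose proof (HN n s Hn hs). lra. }
    assert (G2 : pd <= p) by (apply Rle_Rpower_l; lra).
    apply (Rmult_le_reg_r p); auto. unfold Rdiv. rewrite Rmult_assoc, Rinv_l by lra.
    rewrite Rmult_1_r. eapply Rle_trans; [apply G1|]. apply Rmult_le_compat_l; lra.
Qed.

Lemma limsup_not_minf (u : nat -> R) : (forall n, 0 <= u n) -> ~ is_limsup u m_infty.
Proof.
  intros H0 H. destruct (H (-1)) as [N HN]. specialize (HN N (le_n N)). specialize (H0 N). lra.
Qed.

Theorem mainTheorem4 (alpha : R) (f g : nat -> R -> R) :
  0 < alpha < 1 ->
  (forall n, Holder_continuous alpha (f n)) ->
  (forall n, Holder_continuous alpha (g n)) ->
  (forall eps, 0 < eps -> exists N, forall n t, (N <= n)%nat -> 0 <= t ->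
      Rabs (g n t) < eps) ->
  (exists L : R, forall n t1 t2, 0 <= t1 -> 0 <= t2 ->
      Rabs (f n t1 - f n t2) <= L * Rabs (t1 - t2)) ->
  forall lfg lf lg : Rbar,
    is_limsup (fun n => Hold alpha (fun t => f n t + g n t)) lfg ->
    is_limsup (fun n => Hold alpha (f n)) lf ->
    is_limsup (fun n => Hold alpha (g n)) lg ->
    Rbar_le lfg (Rbar_max lf lg).
Proof.
  intros Ha Hf Hg Hconv HL lfg lf lg Hfg Hlf Hlg.
  pose proof (key alpha f g Ha Hf Hg Hconv HL) as K.
  destruct lf as [x| |].
  2:{ destruct lfg, lg; simpl; auto. }
  2:{ exfalso; exact (limsup_not_minf _ (fun n => Hold_ge0 _ _ (Hf n)) Hlf). }
  destruct lg as [y| |].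
  2:{ destruct lfg; simpl; auto. }
  2:{ exfalso; exact (limsup_not_minf _ (fun n => Hold_ge0 _ _ (Hg n)) Hlg). }
  destruct Hlf as [Hf1 _]. destruct Hlg as [Hg1 _].
  destruct lfg as [z| |]; simpl; auto.
  - destruct Hfg as [_ Hz].
    destruct (Rle_dec z (Rmax x y)) as [|Hnot]; auto. exfalso.
    set (e := (z - Rmax x y) / 3).
    assert (He : 0 < e) by (unfold e; lra).
    destruct (Hf1 e He) as [N1 H1]. destruct (Hg1 e He) as [N2 H2].
    destruct (K e He) as [N3 H3].
    destruct (Hz e He (N1 + N2 + N3)%nat) as [n [Hn Hzn]].
    specialize (H1 n ltac:(lia)). specialize (H2 n ltac:(lia)). specialize (H3 n ltac:(lia)).
    pose proof (Rmax_l x y). pose proof (Rmax_r x y).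
    assert (Rmax (Hold alpha (f n)) (Hold alpha (g n)) < Rmax x y + e).
    { apply Rmax_lub_lt; lra. }
    unfold e in *. lra.
  - destruct (Hf1 1 Rlt_0_1) as [N1 H1]. destruct (Hg1 1 Rlt_0_1) as [N2 H2].
    destruct (K 1 Rlt_0_1) as [N3 H3].
    destruct (Hfg (Rmax x y + 2) (N1 + N2 + N3)%nat) as [n [Hn Hzn]].
    specialize (H1 n ltac:(lia)). specialize (H2 n ltac:(lia)). specialize (H3 n ltac:(lia)).
    pose proof (Rmax_l x y). pose proof (Rmax_r x y).
    assert (Rmax (Hold alpha (f n)) (Hold alpha (g n)) < Rmax x y + 1).
    { apply Rmax_lub_lt; lra. }
    lra.
Qed.
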